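(* If $k>\ell\geq t+2$ and $n\geq\max\{2L(k,t),\ t+1+(k-t)(\ell-t)\}$, then $r_1(n,k,\ell,t)>r_1(n,\ell,k,t)$.
   Context: $S(n,k)$ is the Stirling number of the second kind, with $S(n,a)=0$ for $a\leq0$. $L(k,t)=(t+1)+(k-t+1)\log_2((t+1)(k-t+1))$. $r_1(n,k,\ell,t)=\Big(\sum_{j=1}^{\ell-t}(-1)^{j-1}\binom{\ell-t}{j}S(n-t-j,k-t-j)\Big)\big(S(n-t,\ell-t)+t\big)$. *)

(* Defs.v *)
From Stdlib Require Import Reals Lra Lia ZArith Arith List.
Import ListNotations.

Fixpoint stirling2 (n k : nat) : nat :=
  match n, k with
  | O, O => 1
  | O, S _ => 0
  | S _, O => 0
  | S n', S k' => S k' * stirling2 n' (S k') + stirling2 n' k'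
  end.

Definition S2 (n : nat) (a : Z) : Z :=
  if (a <=? 0)%Z then 0%Z else Z.of_nat (stirling2 n (Z.to_nat a)).

Fixpoint binom (n k : nat) : nat :=
  match n, k with
  | _, O => 1
  | O, S _ => 0
  | S n', S k' => binom n' k' + binom n' (S k')
  end.

Definition log2R (x : R) : R := (ln x / ln 2)%R.

Definition L (k t : nat) : R :=
  (IZR (Z.of_nat t + 1) + IZR (Z.of_nat k - Z.of_nat t + 1) *
     log2R (IZR ((Z.of_nat t + 1) * (Z.of_nat k - Z.of_nat t + 1))))%R.

Definition r1 (n k l t : nat) : Z :=
  (fold_right Z.add 0%Z
     (map (fun j : nat =>
             ((-1) ^ (Z.of_nat j - 1) * Z.of_nat (binom (l - t) j) *
              S2 (n - t - j) (Z.of_nat k - Z.of_nat t - Z.of_nat j))%Z)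
          (seq 1 (l - t))))
  * (S2 (n - t) (Z.of_nat l - Z.of_nat t) + Z.of_nat t).

(* Main.v *)
Require Import Defs.
From Stdlib Require Import Reals ZArith Arith Lia Lra List.
Import ListNotations.

Module PA.
Local Open Scope Z_scope.

Definition Sz (n:nat) (c:Z) : Z :=
  if (c <? 0)%Z then 0 else Z.of_nat (stirling2 n (Z.to_nat c)).

Lemma Sz_nonneg n c : 0 <= Sz n c.
Proof. unfold Sz; destruct (c <? 0); lia. Qed.

Lemma Sz_neg n c : c < 0 -> Sz n c = 0.
Proof. intros; unfold Sz; destruct (Z.ltb_spec c 0); lia. Qed.

Lemma Sz_rec n c : Sz (S n) c = c * Sz n c + Sz n (c-1).
Proof.
  unfold Sz. destruct (Z.ltb_spec c 0).
  - destruct (Z.ltb_spec (c-1) 0); lia.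
  - destruct (Z.ltb_spec (c-1) 0).
    + assert (c = 0) by lia. subst. simpl. lia.
    + remember (Z.to_nat (c-1)) as k eqn:Hk.
      replace (Z.to_nat c) with (S k) by lia.
      replace c with (Z.of_nat (S k)) by lia.
      simpl stirling2. lia.
Qed.

Fixpoint Alt (d:nat) (F : nat -> Z) : Z :=
  match d with
  | O => F O
  | S d' => Alt d' F - Alt d' (fun j => F (S j))
  end.

Lemma Alt_ext d : forall F G, (forall j, (j <= d)%nat -> F j = G j) -> Alt d F = Alt d G.
Proof.
  induction d; intros F G H; simpl.
  - apply H; lia.
  - rewrite (IHd F G), (IHd (fun j => F (S j)) (fun j => G (S j))); auto;
    intros; apply H; lia.
Qed.

Lemma Alt_lin d : forall x F G, Alt d (fun j => x * F j + G j) = x * Alt d F + Alt d G.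
Proof.
  induction d; intros; simpl; auto.
  rewrite IHd. rewrite (IHd x (fun j => F (S j)) (fun j => G (S j))). ring.
Qed.

Lemma Alt_zero d : forall F, (forall j, F j = 0) -> Alt d F = 0.
Proof.
  induction d; intros; simpl; auto.
  rewrite IHd, IHd; auto.
Qed.

Lemma Alt_jmul d : forall H,
  Alt (S d) (fun j => Z.of_nat j * H j) = - Z.of_nat (S d) * Alt d (fun j => H (S j)).
Proof.
  induction d; intros H.
  - cbn [Alt]. lia.
  - change (Alt (S (S d)) (fun j => Z.of_nat j * H j)) with
      (Alt (S d) (fun j => Z.of_nat j * H j) - Alt (S d) (fun j => Z.of_nat (S j) * H (S j))).
    rewrite (Alt_ext (S d) (fun j => Z.of_nat (S j) * H (S j))
               (fun j => 1 * (Z.of_nat j * H (S j)) + H (S j))) by (intros; lia).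
    rewrite Alt_lin. rewrite IHd. rewrite (IHd (fun j => H (S j))).
    change (Alt (S d) (fun j => H (S j))) with
      (Alt d (fun j => H (S j)) - Alt d (fun j => H (S (S j)))).
    lia.
Qed.

Definition U (M:nat) (c:Z) (d:nat) : Z := Alt d (fun j => Sz (M - j) (c - Z.of_nat j)).

Lemma U_pascal M c d : U M c (S d) = U M c d - U (M-1) (c-1) d.
Proof.
  unfold U. simpl. f_equal. apply Alt_ext. intros. f_equal; lia.
Qed.

Lemma U_neg M c d : c < 0 -> U M c d = 0.
Proof. intros; unfold U; apply Alt_zero; intros; apply Sz_neg; lia. Qed.

Lemma U_NS M c d : (d + 1 <= M)%nat ->
  U M c d = c * U (M-1) c d + U (M-1) (c-1) d + Z.of_nat d * U (M-2) (c-1) (d-1).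
Proof.
  intros Hd. unfold U.
  rewrite (Alt_ext d _ (fun j => c * Sz (M-1-j) (c - Z.of_nat j)
     + ((-1) * (Z.of_nat j * Sz (M-1-j) (c - Z.of_nat j)) + Sz (M-1-j) (c - 1 - Z.of_nat j)))).
  2:{ intros j Hj. replace (M - j)%nat with (S (M-1-j)) by lia. rewrite Sz_rec.
      replace (c - Z.of_nat j - 1) with (c - 1 - Z.of_nat j) by lia. ring. }
  rewrite Alt_lin, Alt_lin.
  destruct d as [|d].
  - simpl. ring.
  - rewrite Alt_jmul.
    rewrite (Alt_ext d (fun j => Sz (M - 1 - S j) (c - Z.of_nat (S j)))
                      (fun j => Sz (M - 2 - j) (c - 1 - Z.of_nat j))).
    2:{ intros; f_equal; lia. }
    replace (S d - 1)%nat with d by lia. ring.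
Qed.

Lemma U_SP M c d : (1 <= d <= M)%nat ->
  U M c d = c * U (M-1) c (d-1) + Z.of_nat (d-1) * U (M-2) (c-1) (d-2).
Proof.
  intros Hd. destruct d as [|d]; [lia|].
  rewrite U_pascal. rewrite (U_NS M c d) by lia.
  replace (S d - 1)%nat with d by lia. replace (S d - 2)%nat with (d-1)%nat by lia. ring.
Qed.

Lemma U_nonneg M : forall c d, (d <= M)%nat -> 0 <= U M c d.
Proof.
  induction M as [M IH] using lt_wf_ind. intros c d Hd.
  destruct (Z.ltb_spec c 0). { rewrite U_neg; lia. }
  destruct d as [|d].
  - unfold U; simpl; apply Sz_nonneg.
  - rewrite U_SP by lia.
    assert (0 <= U (M-1) c (S d - 1)) by (apply IH; lia).
    destruct d as [|d].
    + simpl Z.of_nat. nia.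
    + assert (0 <= U (M-2) (c-1) (S (S d) - 2)) by (apply IH; lia). nia.
Qed.

Fixpoint sumZ (n:nat) (f : nat -> Z) : Z :=
  match n with O => 0 | S n' => sumZ n' f + f n' end.

Lemma U_T M c d : Sz M c - U M c d = sumZ d (fun i => U (M-1) (c-1) i).
Proof.
  induction d. { unfold U; cbn [Alt sumZ]. rewrite Nat.sub_0_r.
    replace (c - Z.of_nat 0) with c by lia. lia. }
  rewrite U_pascal. cbn [sumZ]. lia.
Qed.

Lemma sumZ_ge d f g : (forall i, (i < d)%nat -> f i <= g i) -> sumZ d f <= sumZ d g.
Proof. induction d; simpl; intros; auto. lia. specialize (IHd ltac:(intros; apply H; lia)).
  specialize (H d ltac:(lia)). lia. Qed.

Lemma T_ge M c d : (1 <= d <= M)%nat -> Sz (M-1) (c-1) <= Sz M c - U M c d.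
Proof.
  intros Hd. rewrite U_T. destruct d as [|d]; [lia|].
  induction d.
  - unfold U; cbn [sumZ Alt]. rewrite Nat.sub_0_r.
    replace (c - 1 - Z.of_nat 0) with (c-1) by lia. lia.
  - cbn [sumZ]. cbn [sumZ] in IHd. assert (0 <= U (M-1) (c-1) (S d)) by (apply U_nonneg; lia).
    specialize (IHd ltac:(lia)). lia.
Qed.

Lemma T_nonneg M c d : (d <= M)%nat -> 0 <= Sz M c - U M c d.
Proof.
  intros. rewrite U_T. apply Z.le_trans with (sumZ d (fun _ => 0)).
  { clear; induction d; simpl; lia. }
  apply sumZ_ge. intros; apply U_nonneg; lia.
Qed.

Lemma sumZ_const d x : sumZ d (fun _ => x) = Z.of_nat d * x.
Proof. induction d; cbn [sumZ]; try rewrite IHd; lia. Qed.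

Lemma T_le M c d : (d <= M)%nat -> Sz M c - U M c d <= Z.of_nat d * Sz (M-1) (c-1).
Proof.
  intros. rewrite U_T. rewrite <- sumZ_const. apply sumZ_ge.
  intros i Hi. pose proof (T_nonneg (M-1) (c-1) i ltac:(lia)). lia.
Qed.

Lemma sumZ_lin d x f g : sumZ d (fun i => f i + x * g i) = sumZ d f + x * sumZ d g.
Proof. induction d; cbn [sumZ]; try rewrite IHd; lia. Qed.

Lemma sumZ_id d : 2 * sumZ d (fun i => Z.of_nat i) = Z.of_nat d * (Z.of_nat d - 1).
Proof. induction d; cbn [sumZ]; [lia|]. rewrite Z.mul_add_distr_l, IHd. lia. Qed.

Lemma T_ge2 M c d : (d <= M)%nat ->
  2 * Z.of_nat d * Sz (M-1) (c-1) - Z.of_nat d * (Z.of_nat d - 1) * Sz (M-2) (c-2)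
  <= 2 * (Sz M c - U M c d).
Proof.
  intros. rewrite U_T.
  assert (sumZ d (fun i => Sz (M-1) (c-1) + (- Sz (M-2) (c-2)) * Z.of_nat i)
          <= sumZ d (fun i => U (M-1) (c-1) i)).
  { apply sumZ_ge. intros i Hi.
    pose proof (T_le (M-1) (c-1) i ltac:(lia)) as HT.
    replace (M-1-1)%nat with (M-2)%nat in HT by lia. replace (c-1-1) with (c-2) in HT by lia. lia. }
  rewrite sumZ_lin, sumZ_const in H0. pose proof (sumZ_id d) as Hid.
  set (Q := sumZ d (fun i => Z.of_nat i)) in *.
  set (R := sumZ d (fun i => U (M-1) (c-1) i)) in *.
  assert (Sz (M-2) (c-2) * (2 * Q) = Sz (M-2) (c-2) * (Z.of_nat d * (Z.of_nat d - 1))) by (rewrite Hid; auto).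
  nia.
Qed.



Definition Fsum (s n : nat) (g : nat -> Z) : Z := fold_right Z.add 0 (map g (seq s n)).

Lemma Fsum_S s n g : Fsum s (S n) g = g s + Fsum (S s) n g.
Proof. reflexivity. Qed.

Lemma Fsum_shift n : forall s g, Fsum (S s) n g = Fsum s n (fun j => g (S j)).
Proof. induction n; intros; auto. rewrite Fsum_S, Fsum_S, IHn. auto. Qed.

Lemma Fsum_last n : forall s g, Fsum s (S n) g = Fsum s n g + g (s + n)%nat.
Proof.
  induction n; intros. { rewrite Fsum_S. unfold Fsum; simpl. rewrite Nat.add_0_r. lia. }
  rewrite Fsum_S, IHn, Fsum_S. replace (S s + n)%nat with (s + S n)%nat by lia. lia.
Qed.

Lemma Fsum_ext n : forall s g h, (forall j, (s <= j)%nat -> g j = h j) -> Fsum s n g = Fsum s n h.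
Proof. induction n; intros; auto. rewrite !Fsum_S, (IHn (S s) g h), H; auto; intros; apply H; lia. Qed.

Lemma Fsum_add n : forall s g h, Fsum s n (fun j => g j + h j) = Fsum s n g + Fsum s n h.
Proof. induction n; intros; auto. rewrite !Fsum_S, IHn. lia. Qed.

Lemma Fsum_opp n : forall s g, Fsum s n (fun j => - g j) = - Fsum s n g.
Proof. induction n; intros; auto. rewrite !Fsum_S, IHn. lia. Qed.

Lemma binom_big n : forall k, (n < k)%nat -> binom n k = 0%nat.
Proof. induction n; intros k H; destruct k; simpl; try lia; auto.
  rewrite IHn, IHn; lia. Qed.

Definition P d F := Fsum 1 d (fun j => (-1)^(Z.of_nat j - 1) * Z.of_nat (binom d j) * F j).

Lemma P_S d F : P (S d) F = P d F + F 1%nat - P d (fun j => F (S j)).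
Proof.
  unfold P. rewrite Fsum_shift.
  rewrite (Fsum_ext (S d) 0 _ (fun j => ((-1)^(Z.of_nat j) * Z.of_nat (binom d j) * F (S j))
                               + ((-1)^(Z.of_nat j) * Z.of_nat (binom d (S j)) * F (S j)))).
  2:{ intros j _. replace (Z.of_nat (S j) - 1) with (Z.of_nat j) by lia.
      cbn [binom]. rewrite Nat2Z.inj_add. ring. }
  rewrite Fsum_add.
  rewrite (Fsum_S 0 d (fun j => (-1) ^ Z.of_nat j * Z.of_nat (binom d j) * F (S j))).
  rewrite (Fsum_ext d 1 (fun j => (-1) ^ Z.of_nat j * Z.of_nat (binom d j) * F (S j))
       (fun j => - ((-1) ^ (Z.of_nat j - 1) * Z.of_nat (binom d j) * F (S j)))).
  2:{ intros j Hj. replace (Z.of_nat j) with (Z.succ (Z.of_nat j - 1)) at 1 by lia.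
      rewrite Z.pow_succ_r by lia. ring. }
  rewrite Fsum_opp.
  rewrite (Fsum_ext (S d) 0 (fun j => (-1) ^ Z.of_nat j * Z.of_nat (binom d (S j)) * F (S j))
        (fun j => (-1) ^ (Z.of_nat (S j) - 1) * Z.of_nat (binom d (S j)) * F (S j))).
  2:{ intros; f_equal; f_equal; f_equal; lia. }
  rewrite <- (Fsum_shift (S d) 0 (fun j => (-1) ^ (Z.of_nat j - 1) * Z.of_nat (binom d j) * F j)).
  rewrite Fsum_last. rewrite (binom_big d (1 + d)) by lia.
  assert (binom d 0 = 1%nat) by (destruct d; auto). rewrite H.
  simpl Z.of_nat. simpl ((-1)^0). ring.
Qed.

Lemma P_Alt d : forall F, P d F = F 0%nat - Alt d F.
Proof.
  induction d; intros. { unfold P, Fsum; simpl. lia. }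
  rewrite P_S, IHd, IHd. cbn [Alt]. lia.
Qed.

End PA.
Import PA.

Module PB.

Notation st := stirling2.

Fixpoint sumN (n:nat) (g : nat -> nat) : nat :=
  match n with O => 0 | S n' => sumN n' g + g n' end.

Lemma sumN_shift n : forall g, sumN (S n) g = g 0 + sumN n (fun k => g (S k)).
Proof. induction n; intros; simpl in *; auto. rewrite IHn. lia. Qed.

Lemma sumN_ext n g h : (forall k, k < n -> g k = h k) -> sumN n g = sumN n h.
Proof. induction n; intros; simpl; auto. rewrite IHn, H; auto. Qed.

Lemma sumN_le n g h : (forall k, k < n -> g k <= h k) -> sumN n g <= sumN n h.
Proof. induction n; intros H; simpl; auto.
  assert (sumN n g <= sumN n h) by (apply IHn; intros; apply H; lia).
  specialize (H n ltac:(lia)). lia. Qed.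

Lemma sumN_add n g h : sumN n (fun k => g k + h k) = sumN n g + sumN n h.
Proof. induction n; simpl; auto. rewrite IHn; lia. Qed.

Lemma sumN_mul n x g : sumN n (fun k => x * g k) = x * sumN n g.
Proof. induction n; simpl; auto. rewrite IHn; lia. Qed.

Lemma sumN_term n g c : c < n -> g c <= sumN n g.
Proof. induction n; intros; simpl. lia. destruct (Nat.eq_dec c n). subst; lia.
  specialize (IHn ltac:(lia)). lia. Qed.

Lemma sumN_ind n c X : sumN n (fun k => if Nat.eqb k c then X else 0) <= X.
Proof.
  induction n; simpl. lia.
  destruct (Nat.eqb_spec n c).
  - subst. assert (sumN c (fun k => if Nat.eqb k c then X else 0) = 0).
    { clear. apply Nat.le_0_r. apply Nat.le_trans with (sumN c (fun _ => 0)).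
      apply sumN_le. intros. destruct (Nat.eqb_spec k c); lia. clear; induction c; simpl; lia. }
    lia.
  - lia.
Qed.

Lemma binom_big n : forall k, (n < k)%nat -> binom n k = 0%nat.
Proof. induction n; intros k H; destruct k; simpl; try lia; auto.
  rewrite IHn, IHn; lia. Qed.

Lemma st_big n : forall k, n < k -> st n k = 0.
Proof. induction n; intros k H; destruct k; simpl; try lia; auto.
  rewrite !IHn; lia. Qed.

Lemma st_n0 n : st (S n) 0 = 0.
Proof. reflexivity. Qed.

Lemma st_rec n k : st (S n) (S k) = S k * st n (S k) + st n k.
Proof. reflexivity. Qed.

Lemma st_nn n : st n n = 1.
Proof. induction n; simpl; auto. rewrite st_big by lia. lia. Qed.

Lemma st_pos n : forall k, 1 <= k <= n -> 1 <= st n k.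
Proof.
  induction n; intros k H. lia.
  destruct k. lia. rewrite st_rec.
  destruct k. { destruct n. simpl; lia. specialize (IHn 1 ltac:(lia)). nia. }
  specialize (IHn (S k) ltac:(lia)). lia.
Qed.

Lemma st_E1 n k : k * st n k <= st (S n) k.
Proof. destruct k. simpl; lia. rewrite st_rec. lia. Qed.

Lemma st_E1_iter j : forall n k, k ^ j * st n k <= st (n + j) k.
Proof.
  induction j; intros. rewrite Nat.pow_0_r, Nat.add_0_r; lia.
  replace (n + S j) with (S (n + j)) by lia.
  eapply Nat.le_trans. 2: apply st_E1. rewrite Nat.pow_succ_r'.
  specialize (IHj n k). nia.
Qed.

Lemma st_lb m a : a <= m -> a ^ (m - a) <= st m a.
Proof.
  intros. pose proof (st_E1_iter (m - a) a a). rewrite st_nn in H0.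
  replace (a + (m - a)) with m in H0 by lia. lia.
Qed.

Fixpoint ff (c k : nat) : nat :=
  match k with O => 1 | S k' => ff c k' * (c - k') end.

Lemma ff_big k : forall c, c < k -> ff c k = 0.
Proof. induction k; intros; simpl. lia. destruct (Nat.eq_dec c k). subst. rewrite Nat.sub_diag. lia.
  rewrite IHk by lia. lia. Qed.

Lemma ff_SS k : forall c, ff (S c) (S k) = S c * ff c k.
Proof. induction k; intros; simpl in *. lia. rewrite IHk. simpl. lia. Qed.

Lemma ff_fact c : ff c c = fact c.
Proof. induction c; auto. rewrite ff_SS, IHc. simpl. lia. Qed.

Lemma ff_mul c k : c * ff c k = ff c (S k) + k * ff c k.
Proof. simpl. destruct (le_lt_dec k c).
  - nia.
  - rewrite ff_big by lia. lia. Qed.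

Lemma ff_ident N : forall c, c ^ N = sumN (S N) (fun k => ff c k * st N k).
Proof.
  induction N; intros c. simpl. lia.
  rewrite Nat.pow_succ_r', IHN. rewrite <- sumN_mul.
  rewrite (sumN_ext (S N) _ (fun k => ff c (S k) * st N k + k * ff c k * st N k)).
  2:{ intros. rewrite Nat.mul_assoc, ff_mul. lia. }
  rewrite sumN_add.
  rewrite (sumN_shift (S N) (fun k => ff c k * st (S N) k)). simpl (ff c 0 * st (S N) 0).
  rewrite (sumN_ext (S N) (fun k => ff c (S k) * st (S N) (S k)) (fun k => ff c (S k) * st N k + S k * ff c (S k) * st N (S k))).
  2:{ intros. rewrite st_rec. lia. }
  rewrite sumN_add.
  assert (sumN (S N) (fun k => k * ff c k * st N k) = sumN (S N) (fun k => S k * ff c (S k) * st N (S k))).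
  { rewrite (sumN_shift N). change (sumN (S N) (fun k => S k * ff c (S k) * st N (S k))) with
      (sumN N (fun k => S k * ff c (S k) * st N (S k)) + S N * ff c (S N) * st N (S N)).
    rewrite (st_big N (S N)) by lia. simpl. lia. }
  lia.
Qed.

Lemma surj_ub N c : fact c * st N c <= c ^ N.
Proof.
  destruct (le_lt_dec c N).
  - rewrite ff_ident. rewrite <- ff_fact.
    apply (sumN_term (S N) (fun k => ff c k * st N k) c). lia.
  - rewrite st_big by lia. lia.
Qed.

Lemma ff_le c k : k <> S c -> ff (S c) k <= S c * ff c k.
Proof.
  intros. destruct k. simpl; lia.
  rewrite ff_SS. simpl. destruct (le_lt_dec k c).
  - nia.
  - rewrite (ff_big k c) by lia. lia.
Qed.

Lemma surj_lb N c : (S c) ^ N <= fact (S c) * st N (S c) + S c * c ^ N.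
Proof.
  rewrite (ff_ident N (S c)), (ff_ident N c).
  rewrite <- sumN_mul.
  eapply Nat.le_trans with
    (sumN (S N) (fun k => (if Nat.eqb k (S c) then fact (S c) * st N (S c) else 0) + S c * (ff c k * st N k))).
  - apply sumN_le. intros k _. destruct (Nat.eqb_spec k (S c)).
    + subst. rewrite ff_fact. lia.
    + pose proof (ff_le c k n). nia.
  - rewrite sumN_add. pose proof (sumN_ind (S N) (S c) (fact (S c) * st N (S c))). lia.
Qed.

Lemma binom_thm N : forall x, sumN (S N) (fun k => binom N k * x ^ k) = (x + 1) ^ N.
Proof.
  induction N; intros. simpl. lia.
  rewrite sumN_shift. simpl (binom (S N) 0 * x ^ 0).
  rewrite (sumN_ext (S N) (fun k => binom (S N) (S k) * x ^ (S k)) (fun k => x * (binom N k * x ^ k) + binom N (S k) * x ^ (S k))).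
  2:{ intros. simpl binom. rewrite Nat.pow_succ_r'. nia. }
  rewrite sumN_add, sumN_mul, IHN.
  assert (sumN (S (S N)) (fun k => binom N k * x ^ k) = 1 + sumN (S N) (fun k => binom N (S k) * x ^ (S k))).
  { rewrite sumN_shift. destruct N; simpl; lia. }
  assert (H2 : sumN (S (S N)) (fun k => binom N k * x ^ k) = sumN (S N) (fun k => binom N k * x ^ k) + binom N (S N) * x ^ (S N)) by reflexivity.
  rewrite IHN, binom_big in H2 by lia. rewrite Nat.pow_succ_r'. lia.
Qed.

Lemma st_sum N : forall c, st (S N) (S c) = sumN (S N) (fun k => binom N k * st k c).
Proof.
  induction N; intros c. { destruct c. reflexivity. rewrite st_rec. cbn. lia. }
  rewrite st_rec. rewrite sumN_shift.
  rewrite (sumN_ext (S N) _ (fun k => binom N k * st (S k) c + binom N (S k) * st (S k) c)).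
  2:{ intros. simpl binom. lia. }
  rewrite sumN_add.
  assert (H1 : sumN (S (S N)) (fun k => binom N k * st k c) =
               binom N 0 * st 0 c + sumN (S N) (fun k => binom N (S k) * st (S k) c))
    by (rewrite sumN_shift; auto).
  assert (H2 : sumN (S (S N)) (fun k => binom N k * st k c) = sumN (S N) (fun k => binom N k * st k c) + binom N (S N) * st (S N) c) by reflexivity.
  rewrite (binom_big N (S N)) in H2 by lia. rewrite <- IHN in H2.
  assert (binom N 0 = 1) by (destruct N; reflexivity). rewrite H in H1.
  assert (binom (S N) 0 = 1) by reflexivity. rewrite H0.
  destruct c.
  - rewrite (sumN_ext (S N) (fun k => binom N k * st (S k) 0) (fun _ => 0)).
    2:{ intros; rewrite st_n0; lia. }
    assert (sumN (S N) (fun _ : nat => 0) = 0) by (clear; induction N; [reflexivity| cbn [sumN] in *; lia]).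
    rewrite st_n0. simpl (st 0 0) in *. lia.
  - rewrite (sumN_ext (S N) (fun k => binom N k * st (S k) (S c))
                (fun k => S c * (binom N k * st k (S c)) + binom N k * st k c)).
    2:{ intros; rewrite st_rec; lia. }
    rewrite sumN_add, sumN_mul, <- IHN, <- IHN.
    simpl (st 0 (S c)) in *. lia.
Qed.

Lemma E2 N c : c ^ N * st (S N) (S c) <= (S c) ^ N * st N c.
Proof.
  rewrite st_sum. rewrite <- sumN_mul.
  eapply Nat.le_trans with (sumN (S N) (fun k => st N c * (binom N k * c ^ k))).
  - apply sumN_le. intros k Hk.
    pose proof (st_E1_iter (N - k) k c). replace (k + (N - k)) with N in H by lia.
    replace (c ^ N) with (c ^ k * c ^ (N - k)) by (rewrite <- Nat.pow_add_r; f_equal; lia).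
    replace (c ^ k * c ^ (N - k) * (binom N k * st k c)) with (binom N k * c ^ k * (c ^ (N - k) * st k c)) by ring.
    replace (st N c * (binom N k * c ^ k)) with (binom N k * c ^ k * st N c) by ring.
    apply Nat.mul_le_mono_l. auto.
  - rewrite sumN_mul, binom_thm. replace (c + 1) with (S c) by lia. lia.
Qed.

End PB.
Import PB.

Module PC.
Local Open Scope R_scope.

Lemma bern (h:R) n : 0 <= h -> 1 + INR n * h <= (1+h)^n.
Proof.
  intros H. destruct (Req_dec h 0). subst. rewrite Rplus_0_r, pow1. lra.
  apply poly. lra.
Qed.

Lemma div_lb c n d : 0 < d -> c * d <= n -> c <= n / d.
Proof.
  intros Hd H. replace c with ((c*d) * / d) by (field; lra).
  unfold Rdiv. apply Rmult_le_compat_r. left; apply Rinv_0_lt_compat; auto. auto.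
Qed.

Lemma INR_ge2 a : (2 <= a)%nat -> 2 <= INR a.
Proof. intros. replace 2 with (INR 2) by (simpl; lra). apply le_INR; auto. Qed.

Lemma pow32 a : (4 <= a)%nat -> 16/10 * INR a <= 2 * (3/2)^a.
Proof.
  induction a; intros H. lia.
  destruct (Nat.eq_dec a 3). subst. simpl. lra.
  specialize (IHa ltac:(lia)). rewrite S_INR. simpl pow.
  assert (4 <= INR a) by (replace 4 with (INR 4) by (simpl; lra); apply le_INR; lia).
  lra.
Qed.

Lemma CII_real (a b N : nat) : (2 <= b)%nat -> (2*b <= a)%nat -> (a*b <= N)%nat ->
  INR b ^ N * (INR a - 1)^N - (INR b - 1)^(S N) * (INR a - 1)^N
    > 11/10 * INR a * ((INR b - 1)^N * INR a ^ N).
Proof.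
  intros Hb Hab HN.
  assert (Hy : 2 <= INR b) by (apply INR_ge2; auto).
  assert (Hx : 2 * INR b <= INR a) by (replace 2 with (INR 2) by (simpl;lra); rewrite <- mult_INR; apply le_INR; auto).
  set (x := INR a) in *. set (y := INR b) in *.
  set (w := y * (x - 1) / (x * (y - 1))).
  assert (Hw1 : w - 1 = (x - y) / (x * (y - 1))) by (unfold w; field; lra).
  assert (Hw : 1 <= w).
  { assert (0 < (x - y) / (x * (y - 1))). apply Rdiv_lt_0_compat; nra. lra. }
  assert (Hsplit : (y * (x - 1))^N = w^N * (x * (y-1))^N).
  { rewrite <- Rpow_mult_distr. f_equal. unfold w. field. lra. }
  assert (HwN : w^(a*b) <= w^N) by (apply Rle_pow; auto).
  replace (a*b)%nat with ((b-1)*a + a)%nat in HwN by (destruct b; [lia|]; simpl; lia).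
  rewrite pow_add, pow_mult in HwN.
  assert (Hb1 : 3/2 <= w^(b-1)).
  { replace w with (1 + (w-1)) by ring. eapply Rle_trans. 2: apply bern; lra.
    rewrite minus_INR by lia. simpl INR. fold y. rewrite Hw1.
    replace ((y - 1) * ((x - y) / (x * (y - 1)))) with ((x-y)/x) by (field; lra).
    apply Rle_trans with (1 + 1/2). lra. apply Rplus_le_compat_l.
    apply div_lb; lra. }
  assert (Hb2 : 2 <= w^a).
  { replace w with (1 + (w-1)) by ring. eapply Rle_trans. 2: apply bern; lra.
    fold x. rewrite Hw1.
    replace (x * ((x - y) / (x * (y - 1)))) with ((x-y)/(y-1)) by (field; lra).
    apply Rle_trans with (1 + 1). lra. apply Rplus_le_compat_l.
    apply div_lb; lra. }
  assert (Hb3 : (3/2)^a <= (w^(b-1))^a) by (apply pow_incr; lra).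
  assert (H4 : (4 <= a)%nat) by lia.
  pose proof (pow32 a H4) as Hp. fold x in Hp.
  assert (HwN2 : 16/10 * x <= w^N).
  { assert (0 <= (3/2)^a) by (apply pow_le; lra).
    assert ((3/2)^a * 2 <= (w^(b-1))^a * w^a) by (apply Rmult_le_compat; lra).
    lra. }
  assert (Hpos : 0 < x^N * (y-1)^N) by (apply Rmult_lt_0_compat; apply pow_lt; lra).
  assert (Hle : (y-1)^(S N) * (x-1)^N <= (y-1) * ((y-1)^N * x^N)).
  { simpl pow. rewrite Rmult_assoc. apply Rmult_le_compat_l. lra.
    apply Rmult_le_compat_l. apply pow_le; lra.
    apply pow_incr; lra. }
  rewrite <- Rpow_mult_distr, Hsplit, Rpow_mult_distr.
  assert (y - 1 <= x / 2 - 1) by lra.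
  set (Z2 := x^N * (y-1)^N) in *.
  replace ((y-1)^N * x^N) with Z2 in * by (unfold Z2; ring).
  nra.
Qed.

Lemma natL1 b : (4 * b * (b-1) <= 3 * 2^b)%nat.
Proof.
  induction b as [|b IH]. simpl; lia.
  destruct (le_lt_dec b 3). { destruct b as [|[|[|[|]]]]; simpl; lia. }
  rewrite Nat.pow_succ_r'. replace (S b - 1)%nat with b by lia. nia.
Qed.

Lemma natL2 b : (17 * b <= 4 * 2^b + 19)%nat.
Proof.
  induction b as [|b IH]. simpl; lia.
  destruct (le_lt_dec b 3). { destruct b as [|[|[|[|]]]]; simpl; lia. }
  rewrite Nat.pow_succ_r'. assert (2^b >= 16)%nat.
  { replace b with (4 + (b-4))%nat by lia. rewrite Nat.pow_add_r. simpl.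
    pose proof (Nat.pow_le_mono_r 2 0 (b-4) ltac:(lia) ltac:(lia)). simpl in H. lia. }
  lia.
Qed.

Lemma CI_real (a b N : nat) : (2 <= b)%nat -> (b+1 <= a)%nat -> (a < 2*b)%nat -> (a*b <= N)%nat ->
  24/13 * INR b * (INR b ^ N * (INR a - 1)^N - (INR b - 1)^(S N) * (INR a - 1)^N)
    > 22/10 * INR a * ((INR b - 1)^N * INR a ^ N).
Proof.
  intros Hb Hab Ha2 HN.
  assert (Hy : 2 <= INR b) by (apply INR_ge2; auto).
  assert (Hx : INR b + 1 <= INR a) by (rewrite <- S_INR; apply le_INR; lia).
  assert (HNr : INR a * INR b <= INR N) by (rewrite <- mult_INR; apply le_INR; auto).
  pose proof (natL1 b) as L1.
  assert (HL1 : 4 * INR b * (INR b - 1) <= 3 * 2^b).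
  { apply le_INR in L1. rewrite !mult_INR, pow_INR, minus_INR in L1 by lia.
    replace (INR 4) with 4 in L1 by (simpl; lra). replace (INR 3) with 3 in L1 by (simpl; lra).
    replace (INR 2) with 2 in L1 by (simpl; lra). replace (INR 1) with 1 in L1 by (simpl; lra). lra. }
  set (x := INR a) in *. set (y := INR b) in *.
  set (w := y * (x - 1) / (x * (y - 1))).
  assert (Hw1 : w - 1 = (x - y) / (x * (y - 1))) by (unfold w; field; lra).
  assert (Hwp : 0 < (x - y) / (x * (y - 1))) by (apply Rdiv_lt_0_compat; nra).
  assert (HwN : 1 + INR N * (w - 1) <= w^N).
  { replace w with (1 + (w-1)) at 2 by ring. apply bern. lra. }
  assert (HwN2 : 1 + y * (x - y) / (y - 1) <= w^N).
  { eapply Rle_trans. 2: exact HwN. rewrite Hw1.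
    assert (x * y * ((x - y) / (x * (y - 1))) = y * (x - y) / (y - 1)) by (field; lra).
    assert (x * y * ((x - y) / (x * (y - 1))) <= INR N * ((x - y) / (x * (y - 1)))).
    { apply Rmult_le_compat_r; lra. } lra. }
  set (al := x / (x - 1)).
  assert (Hal1 : 2 <= al ^ (a-1)).
  { replace al with (1 + 1/(x-1)) by (unfold al; field; lra).
    eapply Rle_trans. 2: apply bern. rewrite minus_INR by lia. fold x. simpl INR.
    right; field; lra. apply Rlt_le, Rdiv_lt_0_compat; lra. }
  assert (HalN : 2^b <= al^N).
  { apply Rle_trans with (al^((a-1)*b)).
    rewrite pow_mult. apply pow_incr; lra.
    apply Rle_pow. unfold al. apply div_lb; lra. nia. }
  set (Z2 := (x * (y-1))^N). set (Z3 := ((x-1)*(y-1))^N).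
  assert (HZ2 : Z2 = al^N * Z3).
  { unfold Z2, Z3. rewrite <- Rpow_mult_distr. f_equal. unfold al. field. lra. }
  assert (HZ3 : 0 < Z3) by (apply pow_lt; nra).
  assert (H2b : 0 < 2^b) by (apply pow_lt; lra).
  assert (HZ23 : 2^b * Z3 <= Z2) by (rewrite HZ2; apply Rmult_le_compat_r; lra).
  assert (Hsplit : y^N * (x-1)^N = w^N * Z2).
  { rewrite <- Rpow_mult_distr. unfold Z2. rewrite <- Rpow_mult_distr. f_equal. unfold w. field. lra. }
  assert (Hs2 : (y-1)^(S N) * (x-1)^N = (y-1) * Z3).
  { unfold Z3. rewrite Rpow_mult_distr. simpl pow. ring. }
  assert (Hs3 : (y - 1)^N * x^N = Z2) by (unfold Z2; rewrite Rpow_mult_distr; ring).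
  rewrite Hsplit, Hs2, Hs3.
  assert (HA : y * (y-1) * Z3 <= 3/4 * Z2).
  { assert (4 * y * (y-1) * (2^b * Z3) <= 3 * 2^b * Z2).
    { apply Rle_trans with (4 * y * (y-1) * Z2). apply Rmult_le_compat_l; nra.
      assert (0 < Z2) by (rewrite HZ2; apply Rmult_lt_0_compat; lra).
      apply Rmult_le_compat_r; lra. }
    apply Rmult_le_reg_l with (4 * 2^b). lra.
    replace (4 * 2 ^ b * (y * (y - 1) * Z3)) with (4 * y * (y - 1) * (2 ^ b * Z3)) by ring. lra. }
  assert (HB : y + (y+1) * (x - y) <= y * w^N).
  { assert (y * (1 + y * (x - y) / (y - 1)) <= y * w^N) by (apply Rmult_le_compat_l; lra).
    assert ((y+1)*(x-y) <= y * (y * (x-y) / (y-1))).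
    { replace (y * (y * (x-y) / (y-1))) with ((y*y) * (x-y) / (y-1)) by (field; lra).
      apply div_lb. lra. nra. }
    nra. }
  assert (0 < Z2) by (rewrite HZ2; apply Rmult_lt_0_compat; lra).
  assert (Hfin : 22/10 * x < 24/13 * (y + (y+1)*(x-y) - 3/4)) by nra.
  nra.
Qed.

Lemma CI_q (a b N : nat) : (2 <= b)%nat -> (b+1 <= a)%nat -> (a < 2*b)%nat -> (a*b <= N)%nat ->
  13 * (INR b - 1) * (INR a - 2)^(N-1) <= 2 * ((INR a - 1)^(N-1) - (INR a - 2)^N).
Proof.
  intros Hb Hab Ha2 HN.
  assert (Hy : 2 <= INR b) by (apply INR_ge2; auto).
  assert (Hx : INR b + 1 <= INR a) by (rewrite <- S_INR; apply le_INR; lia).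
  assert (Hx2 : INR a <= 2 * INR b - 1).
  { assert (INR (S a) <= INR (2*b)) by (apply le_INR; lia). rewrite S_INR, mult_INR in H. simpl in H. lra. }
  pose proof (natL2 b) as L2.
  assert (HL2 : 17 * INR b <= 4 * 2^b + 19).
  { apply le_INR in L2. rewrite plus_INR, !mult_INR, pow_INR in L2.
    replace (INR 4) with 4 in L2 by (simpl; lra). replace (INR 17) with 17 in L2 by (simpl; lra).
    replace (INR 2) with 2 in L2 by (simpl; lra). replace (INR 19) with 19 in L2 by (simpl; lra). lra. }
  set (x := INR a) in *. set (y := INR b) in *.
  set (g := (x - 1) / (x - 2)).
  assert (Hg : 2 <= g ^ (a-2)).
  { replace g with (1 + 1/(x-2)) by (unfold g; field; lra).
    eapply Rle_trans. 2: apply bern. rewrite minus_INR by lia. fold x. simpl INR.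
    right; field; lra. apply Rlt_le, Rdiv_lt_0_compat; lra. }
  assert (HgN : 2^(b+1) <= g^(N-1)).
  { apply Rle_trans with (g^((a-2)*(b+1))).
    rewrite pow_mult. apply pow_incr; lra.
    apply Rle_pow. unfold g. apply div_lb; lra. nia. }
  rewrite pow_add in HgN. simpl (2^1) in HgN.
  assert (E1 : (x-1)^(N-1) = g^(N-1) * (x-2)^(N-1)).
  { rewrite <- Rpow_mult_distr. f_equal. unfold g. field. lra. }
  assert (E2 : (x-2)^N = (x-2) * (x-2)^(N-1)).
  { replace N with (S (N-1)) at 1 by nia. reflexivity. }
  rewrite E1, E2.
  assert (0 < (x-2)^(N-1)) by (apply pow_lt; lra).
  assert (13 * (y - 1) <= 2 * (g^(N-1) - (x-2))) by lra.
  nra.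
Qed.

End PC.
Import PC.


Module PD.
Local Open Scope R_scope.

Lemma F4R (c M : nat) : (2 <= c)%nat ->
  INR (st M (c-1)) * (INR c ^ M - (INR c - 1)^(S M)) <= (INR c - 1)^M * INR (st (S M) c).
Proof.
  intros Hc. destruct c as [|c']; [lia|].
  replace (S c' - 1)%nat with c' by lia.
  pose proof (surj_lb M c') as h1. pose proof (surj_ub M c') as h2.
  apply le_INR in h1. apply le_INR in h2.
  rewrite st_rec.
  rewrite plus_INR, !mult_INR, !pow_INR in h1. rewrite mult_INR, pow_INR in h2.
  rewrite plus_INR, mult_INR.
  replace (fact (S c')) with (S c' * fact c')%nat in h1 by reflexivity. rewrite mult_INR in h1.
  rewrite S_INR in *. replace (INR c' + 1 - 1) with (INR c') by ring.
  set (P := (INR c' + 1)^M) in *. set (Q := INR c' ^ M) in *.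
  set (f := INR (fact c')) in *. set (X := INR (st M (S c'))) in *. set (Y := INR (st M c')) in *.
  assert (0 < f) by (apply lt_0_INR, lt_O_fact).
  assert (0 <= X) by apply pos_INR. assert (0 <= Y) by apply pos_INR.
  assert (0 <= INR c') by apply pos_INR.
  assert (0 <= Q) by (apply pow_le; auto).
  simpl pow. fold Q.
  assert (Y * (P - (INR c' + 1) * Q) <= Q * ((INR c' + 1) * X)).
  { destruct (Rle_dec (P - (INR c' + 1) * Q) 0).
    - assert (0 <= Q * ((INR c' + 1) * X)) by (apply Rmult_le_pos; [auto| apply Rmult_le_pos; lra]). nra.
    - apply Rle_trans with (Y * ((INR c' + 1) * f * X)). apply Rmult_le_compat_l; lra.
      replace (Y * ((INR c' + 1) * f * X)) with ((f * Y) * ((INR c' + 1) * X)) by ring.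
      apply Rmult_le_compat_r. apply Rmult_le_pos; lra. auto. }
  nra.
Qed.

Lemma main_R (a b N : nat) (TL TR mm : R) :
  (2 <= b)%nat -> (b+1 <= a)%nat -> (a*b <= N)%nat ->
  TR <= INR a * INR (st N (b-1)) -> INR (st N (a-1)) <= TL ->
  2 * INR b * INR (st N (a-1)) - INR b * (INR b - 1) * INR (st (N-1) (a-2)) <= 2 * TL ->
  0 <= mm -> 10 * mm <= INR (st (S N) a) ->
  TL * INR (st (S N) b) > TR * (INR (st (S N) a) + mm).
Proof.
  intros Hb Hab HN h1 h2 h2' hm hm2.
  assert (HA1 : 0 < INR (st N (a-1))) by (apply lt_0_INR; apply st_pos; nia).
  assert (HB : 0 < INR (st N (b-1))) by (apply lt_0_INR; apply st_pos; nia).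
  pose proof (E2 N (a-1)) as hE. replace (S (a-1)) with a in hE by lia.
  apply le_INR in hE. rewrite !mult_INR, !pow_INR, minus_INR in hE by lia. simpl (INR 1) in hE.
  pose proof (F4R b N Hb) as hF4.
  assert (Hy : 2 <= INR b) by (apply INR_ge2; auto).
  assert (Hx : INR b + 1 <= INR a) by (rewrite <- S_INR; apply le_INR; lia).
  set (x := INR a) in *. set (y := INR b) in *.
  set (A1 := INR (st N (a-1))) in *. set (A2 := INR (st (N-1) (a-2))) in *.
  set (Bv := INR (st N (b-1))) in *. set (Sb := INR (st (S N) b)) in *.
  set (Sa := INR (st (S N) a)) in *.
  assert (HSb : 0 <= Sb) by apply pos_INR. assert (HSa : 0 <= Sa) by apply pos_INR.
  assert (HA2 : 0 <= A2) by apply pos_INR.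
  set (PA := (x-1)^N) in *. set (QB := (y-1)^N) in *.
  assert (HPA : 0 < PA) by (apply pow_lt; lra). assert (HQB : 0 < QB) by (apply pow_lt; lra).
  set (K := y^N - (y-1)^(S N)) in *.
  assert (HR : TR * (Sa + mm) <= 11/10 * x * Bv * Sa).
  { apply Rle_trans with (x * Bv * (Sa + mm)). apply Rmult_le_compat_r; lra.
    assert (0 <= x * Bv) by (apply Rmult_le_pos; lra). nra. }
  assert (HR2 : 11/10 * x * Bv * Sa * PA * QB <= 11/10 * x * Bv * QB * (x^N * A1)).
  { replace (11/10 * x * Bv * Sa * PA * QB) with ((11/10 * x * Bv * QB) * (PA * Sa)) by ring.
    apply Rmult_le_compat_l. apply Rmult_le_pos; [|lra]. apply Rmult_le_pos; [|lra]. lra. auto. }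
  destruct (le_lt_dec (2*b) a) as [Hcase|Hcase].
  - pose proof (CII_real a b N Hb Hcase HN) as hC. fold x y PA QB in hC.
    replace (y ^ N * PA - (y - 1) ^ S N * PA) with (K * PA) in hC by (unfold K; ring).
    assert (A1 * Sb <= TL * Sb) by (apply Rmult_le_compat_r; lra).
    assert (A1 * PA * (Bv * K) <= A1 * Sb * PA * QB).
    { replace (A1 * Sb * PA * QB) with ((A1 * PA) * (QB * Sb)) by ring.
      apply Rmult_le_compat_l. apply Rmult_le_pos; lra. lra. }
    assert (A1 * PA * (Bv * K) > A1 * Bv * (11/10 * x * (QB * x^N))).
    { replace (A1 * PA * (Bv * K)) with ((A1 * Bv) * (K * PA)) by ring.
      apply Rmult_lt_compat_l. apply Rmult_lt_0_compat; lra. lra. }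
    assert (Hfin : A1 * Sb * (PA * QB) > 11/10 * x * Bv * Sa * (PA * QB)).
    { assert (e1 : A1 * Sb * (PA * QB) = A1 * Sb * PA * QB) by ring.
      assert (e2 : 11/10 * x * Bv * Sa * (PA * QB) = 11 / 10 * x * Bv * Sa * PA * QB) by ring.
      assert (e3 : 11 / 10 * x * Bv * QB * (x ^ N * A1) = A1 * Bv * (11 / 10 * x * (QB * x ^ N))) by ring.
      lra. }
    apply Rmult_lt_reg_r in Hfin. nra. apply Rmult_lt_0_compat; lra.
  - pose proof (CI_real a b N Hb Hab Hcase HN) as hC. fold x y PA QB in hC.
    replace (y ^ N * PA - (y - 1) ^ S N * PA) with (K * PA) in hC by (unfold K; ring).
    pose proof (CI_q a b N Hb Hab Hcase HN) as hq. fold x y in hq.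
    assert (Ha3 : (3 <= a)%nat) by lia.
    pose proof (F4R (a-1) (N-1) ltac:(lia)) as hF5.
    replace (a - 1 - 1)%nat with (a-2)%nat in hF5 by lia.
    replace (S (N-1)) with N in hF5 by nia. fold A1 A2 in hF5.
    rewrite minus_INR in hF5 by lia. fold x in hF5. simpl (INR 1) in hF5.
    replace (x - 1 - 1) with (x - 2) in hF5 by ring.
    replace (S (N-1)) with N in hF5 by nia.
    assert (H2x : 0 < (x-2)^(N-1)) by (apply pow_lt; lra).
    set (D := (x-1)^(N-1) - (x-2)^N) in *.
    assert (HD : 0 < D) by nra.
    assert (Hq : 13 * (y-1) * A2 <= 2 * A1).
    { apply Rmult_le_reg_r with D. auto.
      apply Rle_trans with (13 * (y-1) * ((x-2)^(N-1) * A1)).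
      replace (13 * (y - 1) * A2 * D) with (13 * (y-1) * (A2 * D)) by ring.
      apply Rmult_le_compat_l. lra. lra.
      replace (13 * (y - 1) * ((x - 2) ^ (N - 1) * A1)) with ((13 * (y - 1) * (x - 2) ^ (N - 1)) * A1) by ring.
      replace (2 * A1 * D) with ((2 * D) * A1) by ring.
      apply Rmult_le_compat_r; lra. }
    set (V := 2 * y * A1 - y * (y - 1) * A2) in *.
    assert (HV : 24/13 * y * A1 <= V) by (unfold V; nra).
    assert (HK : 0 < K).
    { assert (0 < 22 / 10 * x * (QB * x ^ N)).
      { apply Rmult_lt_0_compat. lra. apply Rmult_lt_0_compat. lra. apply pow_lt; lra. }
      assert (0 < 24 / 13 * y * K * PA) by lra.
      destruct (Rle_dec K 0). assert (0 <= 24/13*y*PA) by (apply Rmult_le_pos; lra).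
      assert (24/13 * y * K * PA = (24/13*y*PA) * K) by ring. nra. lra. }
    assert (HV0 : 0 <= V) by (assert (0 < y * A1) by (apply Rmult_lt_0_compat; lra); lra).
    assert (V * Sb <= 2 * TL * Sb) by (apply Rmult_le_compat_r; lra).
    assert (V * (Bv * K) <= V * Sb * QB).
    { replace (V * Sb * QB) with (V * (QB * Sb)) by ring. apply Rmult_le_compat_l; lra. }
    assert (24/13 * y * A1 * (Bv * K) <= V * (Bv * K)).
    { apply Rmult_le_compat_r. apply Rmult_le_pos; lra. lra. }
    assert (24/13 * y * A1 * (Bv * K) * PA > A1 * Bv * (22/10 * x * (QB * x^N))).
    { replace (24 / 13 * y * A1 * (Bv * K) * PA) with ((A1 * Bv) * (24/13 * y * K * PA)) by ring.
      apply Rmult_lt_compat_l. apply Rmult_lt_0_compat; lra. lra. }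
    assert (s1 : V * Sb * (PA * QB) <= 2 * TL * Sb * (PA * QB)) by (apply Rmult_le_compat_r; nra).
    assert (s2 : V * (Bv * K) * PA <= V * Sb * QB * PA) by (apply Rmult_le_compat_r; lra).
    assert (s3 : 24/13 * y * A1 * (Bv * K) * PA <= V * (Bv * K) * PA) by (apply Rmult_le_compat_r; lra).
    assert (e1 : V * Sb * (PA * QB) = V * Sb * QB * PA) by ring.
    assert (e2 : 2 * (11/10 * x * Bv * Sa) * (PA * QB) = 2 * (11 / 10 * x * Bv * Sa * PA * QB)) by ring.
    assert (e3 : 2 * (11 / 10 * x * Bv * QB * (x ^ N * A1)) = A1 * Bv * (22 / 10 * x * (QB * x ^ N))) by field.
    assert (Hfin : 2 * TL * Sb * (PA * QB) > 2 * (11/10 * x * Bv * Sa) * (PA * QB)) by lra.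
    apply Rmult_lt_reg_r in Hfin. lra. apply Rmult_lt_0_compat; lra.
Qed.

End PD.

Import PD.

Module PE.

Lemma Sz_nat n c : Sz n (Z.of_nat c) = Z.of_nat (st n c).
Proof. unfold Sz. destruct (Z.ltb_spec (Z.of_nat c) 0). lia. rewrite Nat2Z.id. auto. Qed.

Lemma S2_Sz N c : (1 <= N)%nat -> S2 N c = Sz N c.
Proof.
  intros H. unfold S2, Sz. destruct (Z.leb_spec c 0); destruct (Z.ltb_spec c 0); auto; try lia.
  assert (c = 0%Z) by lia. subst. simpl. destruct N; [lia|]. reflexivity.
Qed.

Lemma nat10 k : (4 <= k)%nat -> (10 * (2*k - 1) <= 3^k)%nat.
Proof.
  induction k; intros H. lia.
  destruct (Nat.eq_dec k 3). subst. simpl. lia.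
  specialize (IHk ltac:(lia)). rewrite Nat.pow_succ_r'. lia.
Qed.

Lemma F6 a b N : (2 <= b)%nat -> (b+1 <= a)%nat -> (a*b <= N)%nat -> (10 * S N <= st (S N) a)%nat.
Proof.
  intros. pose proof (st_lb (S N) a ltac:(nia)).
  set (k := (S N - a)%nat) in *.
  assert (4 <= k)%nat by (unfold k; nia).
  pose proof (nat10 k H3).
  assert (3^k <= a^k)%nat by (apply Nat.pow_le_mono_l; lia).
  assert (S N <= 2*k - 1)%nat by (unfold k; nia).
  lia.
Qed.

Lemma mainZ (a b N t : nat) : (2 <= b)%nat -> (b+1 <= a)%nat -> (a*b <= N)%nat -> (t <= S N)%nat ->
  ((Sz (S N) (Z.of_nat a) - U (S N) (Z.of_nat a) b) * (Sz (S N) (Z.of_nat b) + Z.of_nat t) >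
   (Sz (S N) (Z.of_nat b) - U (S N) (Z.of_nat b) a) * (Sz (S N) (Z.of_nat a) + Z.of_nat t))%Z.
Proof.
  intros Hb Hab HN Ht.
  pose proof (T_le (S N) (Z.of_nat b) a ltac:(nia)) as hTR.
  pose proof (T_ge (S N) (Z.of_nat a) b ltac:(nia)) as hTL.
  pose proof (T_ge2 (S N) (Z.of_nat a) b ltac:(nia)) as hTL2.
  pose proof (T_nonneg (S N) (Z.of_nat b) a ltac:(nia)) as hTR0.
  pose proof (T_nonneg (S N) (Z.of_nat a) b ltac:(nia)) as hTL0.
  replace (S N - 1)%nat with N in * by lia. replace (S N - 2)%nat with (N-1)%nat in * by lia.
  replace (Z.of_nat b - 1)%Z with (Z.of_nat (b-1)) in * by lia.
  replace (Z.of_nat a - 1)%Z with (Z.of_nat (a-1)) in * by lia.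
  replace (Z.of_nat a - 2)%Z with (Z.of_nat (a-2)) in * by lia.
  rewrite !Sz_nat in *.
  set (TL := (Z.of_nat (st (S N) a) - U (S N) (Z.of_nat a) b)%Z) in *.
  set (TR := (Z.of_nat (st (S N) b) - U (S N) (Z.of_nat b) a)%Z) in *.
  pose proof (F6 a b N Hb Hab HN) as h6.
  assert (HR : (IZR TL * INR (st (S N) b) > IZR TR * (INR (st (S N) a) + INR (S N)))%R).
  { apply main_R; auto.
    - apply IZR_le in hTR. rewrite mult_IZR, <- !INR_IZR_INZ in hTR. auto.
    - apply IZR_le in hTL. rewrite <- !INR_IZR_INZ in hTL. auto.
    - apply IZR_le in hTL2. rewrite !minus_IZR, !mult_IZR, <- !INR_IZR_INZ in hTL2.
      replace (IZR 2) with 2%R in hTL2 by reflexivity. replace (IZR 1) with 1%R in hTL2 by reflexivity.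
      rewrite minus_INR in hTL2 by lia. simpl (INR 1) in hTL2. lra.
    - apply pos_INR.
    - apply le_INR in h6. rewrite mult_INR in h6. simpl (INR 10) in h6. lra. }
  rewrite !INR_IZR_INZ, <- plus_IZR, <- !mult_IZR in HR. apply lt_IZR in HR.
  nia.
Qed.

End PE.

Import PE.

Lemma L_ge (k t : nat) : (t < k)%nat -> (INR t + 1 <= L k t)%R.
Proof.
  intros H. unfold L, log2R.
  rewrite plus_IZR, <- INR_IZR_INZ.
  assert (Hk : (0 < IZR (Z.of_nat k - Z.of_nat t + 1))%R) by (apply IZR_lt; lia).
  assert (Hx : (1 <= IZR ((Z.of_nat t + 1) * (Z.of_nat k - Z.of_nat t + 1)))%R) by (apply IZR_le; nia).
  set (x := IZR ((Z.of_nat t + 1) * (Z.of_nat k - Z.of_nat t + 1))) in *.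
  assert (Hl : (0 <= ln x)%R).
  { destruct (Req_dec x 1). rewrite H0, ln_1. lra. rewrite <- ln_1. left. apply ln_increasing; lra. }
  assert (Hl2 : (0 < ln 2)%R) by (rewrite <- ln_1; apply ln_increasing; lra).
  assert (0 <= ln x / ln 2)%R by (apply Rmult_le_pos; [auto| left; apply Rinv_0_lt_compat; auto]).
  assert (0 <= IZR (Z.of_nat k - Z.of_nat t + 1) * (ln x / ln 2))%R by (apply Rmult_le_pos; lra).
  replace (IZR 1) with 1%R by reflexivity. lra.
Qed.

Theorem mainTheorem19 (n k l t : nat) :
  (k > l)%nat -> (l >= t + 2)%nat ->
  (INR n >= 2 * L k t)%R ->
  (n >= t + 1 + (k - t) * (l - t))%nat ->
  (r1 n k l t > r1 n l k t)%Z.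
Proof.
  intros Hkl Hlt HL Hn.
  pose proof (L_ge k t ltac:(lia)) as HL2.
  assert (Htn : (2 * t + 2 <= n)%nat).
  { apply INR_le. rewrite plus_INR, mult_INR. simpl (INR 2). lra. }
  set (a := (k - t)%nat) in *. set (b := (l - t)%nat) in *.
  set (N := (n - t - 1)%nat).
  assert (Hb : (2 <= b)%nat) by (unfold b; lia).
  assert (Hab : (b + 1 <= a)%nat) by (unfold a, b; lia).
  assert (HN : (a * b <= N)%nat) by (unfold N; lia).
  assert (Hm : (n - t = S N)%nat) by (unfold N; lia).
  assert (Ht : (t <= S N)%nat) by lia.
  pose proof (mainZ a b N t Hb Hab HN Ht) as HM.
  unfold r1.
  change (fold_right Z.add 0%Z (map (fun j : nat =>
       ((-1) ^ (Z.of_nat j - 1) * Z.of_nat (binom (l - t) j) *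
        S2 (n - t - j) (Z.of_nat k - Z.of_nat t - Z.of_nat j))%Z) (seq 1 (l - t))))
    with (P b (fun j => S2 (n - t - j) (Z.of_nat k - Z.of_nat t - Z.of_nat j))).
  change (fold_right Z.add 0%Z (map (fun j : nat =>
       ((-1) ^ (Z.of_nat j - 1) * Z.of_nat (binom (k - t) j) *
        S2 (n - t - j) (Z.of_nat l - Z.of_nat t - Z.of_nat j))%Z) (seq 1 (k - t))))
    with (P a (fun j => S2 (n - t - j) (Z.of_nat l - Z.of_nat t - Z.of_nat j))).
  rewrite !P_Alt.
  replace (Z.of_nat k - Z.of_nat t)%Z with (Z.of_nat a) by (unfold a; lia).
  replace (Z.of_nat l - Z.of_nat t)%Z with (Z.of_nat b) by (unfold b; lia).
  rewrite Hm.
  rewrite (Alt_ext b (fun j => S2 (S N - j) (Z.of_nat a - Z.of_nat j))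
              (fun j => Sz (S N - j) (Z.of_nat a - Z.of_nat j))).
  2:{ intros j Hj. apply S2_Sz. nia. }
  rewrite (Alt_ext a (fun j => S2 (S N - j) (Z.of_nat b - Z.of_nat j))
              (fun j => Sz (S N - j) (Z.of_nat b - Z.of_nat j))).
  2:{ intros j Hj. apply S2_Sz. nia. }
  rewrite !S2_Sz by lia.
  change (Alt b (fun j => Sz (S N - j) (Z.of_nat a - Z.of_nat j))) with (U (S N) (Z.of_nat a) b).
  change (Alt a (fun j => Sz (S N - j) (Z.of_nat b - Z.of_nat j))) with (U (S N) (Z.of_nat b) a).
  rewrite Nat.sub_0_r. replace (Z.of_nat a - Z.of_nat 0)%Z with (Z.of_nat a) by lia.
  replace (Z.of_nat b - Z.of_nat 0)%Z with (Z.of_nat b) by lia.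
  exact HM.
Qed.
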